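(* Let $\mathfrak R\subseteq\mathfrak R(d_*,L_*,s_* )$ be a cubical iterated graph system with replacement graphs $G_m$. Then for all $m\in\mathbb N$ and $w,v\in W_m$, \[ d_{G_m}(w,v)\le 4\operatorname{diam}(G_1)\cdot L_*^m. \]
   Context: Graphs: $(V,E)$, $V$ finite non-empty, $E\subseteq V\times V$, $(x,y)\in E\Rightarrow(y,x)\notin E$; $d_G$ is the shortest-path metric in the underlying undirected graph and $\operatorname{diam}$ the corresponding diameter. An iterated graph system (IGS) $\mathfrak R$ consists of a connected graph $G_1=(S,E)$, a finite set $\mathcal T$ of types, a surjective typing $\mathfrak t:E\to\mathcal T$ and non-empty gluing rules $I_t\subseteq S\times S$. With $W_m=S^m$, $[w]_k=w_1\cdots w_k$, the replacement graphs $G_m=(W_m,E_m)$ are defined recursively: $(w,v)\in E_{m+1}$ iff either (1) $[w]_m=[v]_m$ and $(w_{m+1},v_{m+1})\in E$ (type $\mathfrak t(w_{m+1},v_{m+1})$), or (2) $([w]_m,[v]_m)\in E_m$ and $(w_{m+1},v_{m+1})\in I_{\mathfrak t([w]_m,[v]_m)}$ (type $\mathfrak t([w]_m,[v]_m)$). Mapping of IGS $\varphi:\mathfrak R\to\mathfrak R'$: a graph mapping $G_1\to G_1'$ (edges go to edges or are collapsed) such that (i) if $\varphi(w_1)=\varphi(v_1)$ for an edge $\{w_1,v_1\}$ of type $t$ then $\varphi(w_2)=\varphi(v_2)$ for all $(w_2,v_2)\in I_t$; (ii) if $(w_1,v_1)\in E$ has type $t$ and $(\varphi(w_1),\varphi(v_1))\in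 E'$ has type $t'$ then $(\varphi(w_2),\varphi(v_2))\in I'_{t'}$ for all $(w_2,v_2)\in I_t$; (iii) if $(w_1,v_1)\in E$ has type $t$ and $(\varphi(v_1),\varphi(w_1))\in E'$ has type $t'$ then $(\varphi(v_2),\varphi(w_2))\in I'_{t'}$ for all $(w_2,v_2)\in I_t$. Isomorphism of IGS: graph isomorphism with it and its inverse mappings of IGS; sub-system $\mathfrak R\subseteq\mathfrak R'$: $S\subseteq S'$, same types, inclusion a mapping of IGS. Cubical IGS: for integers $d_*\ge1,s_*\ge1,L_*\ge3$, $\mathfrak R(d_*,L_*,s_* )$ has symbols $\{1,\dots,L_*\}^{d_*}\times\{\underline1,\dots,\underline{s_*}\}$ with coordinates $c_i$ and sheet $s$; types $t_1,\dots,t_{d_*}$; $(w,v)$ is an edge of type $t_j$ iff $c_i(v)=c_i(w)$ ($i\ne j$), $c_j(v)=c_j(w)+1$; $(w,v)\in I_{t_j}$ iff $c_i(w)=c_i(v)$ ($i\ne j$), $(c_j(w),c_j(v))=(L_*,1)$, $s(w)=s(v)$. Sheet- and other-coordinate-preserving maps: $\eta_j:c_j\mapsto L_*+1-c_j$; $\alpha^+_{j,k}$ ($j\ne k$) swaps $c_j,c_k$; $\alpha^-_{j,k}$: $c_k\mapsto L_*+1-c_j$, $c_j\mapsto L_*+1-c_k$; $\mathcal G$ the set of these. A cubical IGS is a sub-system $\mathfrak R\subseteq\mathfrak R(d_*,L_*,s_* )$ with: (C1) for each $j$, every symbol with $c_i\in\{1,L_*\}$ for all $i\ne j$ and sheet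 $\underline1$ (condition $(\ast_j)$) is in $S(\mathfrak R)$; (C2) if $w,v$ satisfy $(\ast_j)$, agree off coordinate $j$, and $c_j(v)=c_j(w)+1$, then $(w,v)\in E(\mathfrak R)$; (C3) if $w,v$ satisfy $(\ast_j)$, agree off coordinate $j$, and $(c_j(w),c_j(v))=(L_*,1)$, then $(w,v)\in I_{t_j}(\mathfrak R)$; (C4) each $\alpha\in\mathcal G$ restricts to an isomorphism of IGS $\mathfrak R\to\mathfrak R$. *)

(* Defs.v *)
From mathcomp Require Import all_boot.
Set Implicit Arguments. Unset Strict Implicit. Unset Printing Implicit Defensive.

(* Symbols live in a finite ambient type S; the actual symbol set is iV.
   Types live in a finite type T.  The typing is partial (option T): only its
   values on edges matter. *)
Record igs (S T : finType) := IGS {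
  iV : {set S};                 (* symbol set S(R), vertex set of G_1 *)
  iE : rel S;                   (* oriented edges of G_1 *)
  ityp : S -> S -> option T;
  iI : T -> rel S               (* gluing rules I_t *)
}.

Section Generic.
Variables (S T : finType).

Definition adj1 (R : igs S T) : rel S := fun x y => iE R x y || iE R y x.

Definition igs_wf (R : igs S T) : Prop :=
  [/\ iV R != set0,
      (forall x y, iE R x y -> (x \in iV R) /\ (y \in iV R)),
      (forall x y, iE R x y -> ~~ iE R y x),
      (forall x y, x \in iV R -> y \in iV R -> connect (adj1 R) x y)
    & [/\ (forall x y, iE R x y -> ityp R x y != None),
      (forall t, exists x y, iE R x y /\ ityp R x y = Some t)
    & (forall t, (exists x y, iI R t x y) /\
                 (forall x y, iI R t x y -> (x \in iV R) /\ (y \in iV R)))]].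

(* ---- replacement graphs G_m ----
   Words w = w_1 ... w_m are seq S of size m with letters in iV.
   etype_rev works on reversed words (head = last letter w_m) and returns
   the type of the edge (w,v) of G_m, or None if (w,v) is not an edge. *)
Fixpoint etype_rev (R : igs S T) (w v : seq S) : option T :=
  match w, v with
  | a :: p, b :: q =>
      if (p == q) && iE R a b then ityp R a b
      else match etype_rev R p q with
           | Some t => if iI R t a b then Some t else None
           | None => None
           end
  | _, _ => None
  end.

Definition word_in (R : igs S T) (m : nat) (w : seq S) : bool :=
  (size w == m) && all (fun a => a \in iV R) w.

Definition Em (R : igs S T) (m : nat) : rel (seq S) := fun w v =>
  [&& word_in R m w, word_in R m v & etype_rev R (rev w) (rev v) != None].

Definition adjm (R : igs S T) (m : nat) : rel (seq S) :=
  fun w v => Em R m w v || Em R m v w.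

End Generic.

Definition within_dist (A : eqType) (e : rel A) (x y : A) (n : nat) : Prop :=
  exists p : seq A, [/\ path e x p, last x p = y & size p <= n].

(* shortest-path distance on a finite graph; since shortest paths have fewer
   than #|T| steps this is exact for connected pairs (convention: #|T|
   otherwise, never used since G_1 is connected). *)
Definition reachn (T : finType) (e : rel T) (n : nat) (x y : T) : bool :=
  [exists t : n.-tuple T, path e x t && (last x t == y)].

Definition gdist (T : finType) (e : rel T) (x y : T) : nat :=
  \big[minn/#|T|]_(n < #|T| | reachn e n x y) n.

Definition diam1 (S T : finType) (R : igs S T) : nat :=
  \max_(x in iV R) \max_(y in iV R) gdist (adj1 R) x y.

Definition igs_mapping (S T S' T' : finType) (R : igs S T) (R' : igs S' T')
    (phi : S -> S') : Prop :=
  [/\ (forall x, x \in iV R -> phi x \in iV R'),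
      (forall x y, iE R x y ->
         [\/ phi x = phi y, iE R' (phi x) (phi y) | iE R' (phi y) (phi x)]),
      (forall x y t, iE R x y -> ityp R x y = Some t -> phi x = phi y ->
         forall a b, iI R t a b -> phi a = phi b),
      (forall x y t t', iE R x y -> ityp R x y = Some t ->
         iE R' (phi x) (phi y) -> ityp R' (phi x) (phi y) = Some t' ->
         forall a b, iI R t a b -> iI R' t' (phi a) (phi b))
    & (forall x y t t', iE R x y -> ityp R x y = Some t ->
         iE R' (phi y) (phi x) -> ityp R' (phi y) (phi x) = Some t' ->
         forall a b, iI R t a b -> iI R' t' (phi b) (phi a))].

Definition igs_iso (S T S' T' : finType) (R : igs S T) (R' : igs S' T')
    (phi : S -> S') (psi : S' -> S) : Prop :=
  [/\ (forall x, x \in iV R -> phi x \in iV R' /\ psi (phi x) = x),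
      (forall y, y \in iV R' -> psi y \in iV R /\ phi (psi y) = y),
      (forall x y, x \in iV R -> y \in iV R ->
         adj1 R x y = adj1 R' (phi x) (phi y)),
      igs_mapping R R' phi
    & igs_mapping R' R psi].

(* ---------- cubical IGS ----------
   Convention: coordinates are 0-based, c_i in {0,...,L-1} (paper: 1..L),
   sheet in {0,...,s-1} (paper: 1..s); type t_j is j : I_d. *)
Definition Sym (d L s : nat) := ({ffun 'I_d -> 'I_L} * 'I_s)%type.

Section Cube.
Variables d L s : nat.
Implicit Types w v : Sym d L s.

Definition crd w (i : 'I_d) : nat := w.1 i.
Definition sheet w : nat := w.2.

Definition cube_edge (j : 'I_d) w v : bool :=
  [forall i, (i != j) ==> (crd w i == crd v i)] && (crd v j == (crd w j).+1).

Definition cube_glue (j : 'I_d) w v : bool :=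
  [&& [forall i, (i != j) ==> (crd w i == crd v i)],
      crd w j == L.-1, crd v j == 0 & sheet w == sheet v].

Definition Rfull : igs (Sym d L s) 'I_d :=
  {| iV := setT;
     iE := fun w v => [exists j, cube_edge j w v];
     ityp := fun w v => [pick j | cube_edge j w v];
     iI := cube_glue |}.

Definition star (j : 'I_d) w : bool :=
  [forall i, (i != j) ==> ((crd w i == 0) || (crd w i == L.-1))] && (sheet w == 0).

Definition eta_map (j : 'I_d) w : Sym d L s :=
  ([ffun i => if i == j then rev_ord (w.1 i) else w.1 i], w.2).
Definition alphap (j k : 'I_d) w : Sym d L s :=
  ([ffun i => if i == j then w.1 k else if i == k then w.1 j else w.1 i], w.2).
Definition alpham (j k : 'I_d) w : Sym d L s :=
  ([ffun i => if i == j then rev_ord (w.1 k)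
              else if i == k then rev_ord (w.1 j) else w.1 i], w.2).

(* the set G of symmetries (all are involutions) *)
Definition in_G (f : Sym d L s -> Sym d L s) : Prop :=
  (exists j, f = eta_map j) \/
  (exists j k, j != k /\ (f = alphap j k \/ f = alpham j k)).

Definition cubical (R : igs (Sym d L s) 'I_d) : Prop :=
  igs_wf R /\ igs_mapping R Rfull id /\                 (* sub-system *)
  [/\
         (forall j w, star j w -> w \in iV R),
      (forall j w v, star j w -> star j v ->
         (forall i, i != j -> crd w i = crd v i) ->
         crd v j = (crd w j).+1 -> iE R w v),
      (forall j w v, star j w -> star j v ->
         (forall i, i != j -> crd w i = crd v i) ->
         crd w j = L.-1 -> crd v j = 0 -> iI R j w v)
    & (forall f, in_G f -> igs_iso R R f f)].

End Cube.

(* Main.v *)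
Require Import Defs.
From mathcomp Require Import all_boot zify.
Set Implicit Arguments. Unset Strict Implicit. Unset Printing Implicit Defensive.

Lemma wd_cat (A : eqType) (e : rel A) x y z n1 n2 :
  within_dist e x y n1 -> within_dist e y z n2 -> within_dist e x z (n1 + n2).
Proof.
move=> [p [P1 L1 S1]] [q [P2 L2 S2]]; exists (p ++ q); split.
- by rewrite cat_path P1 L1 P2.
- by rewrite last_cat L1.
- by rewrite size_cat leq_add.
Qed.

Lemma wd_mono (A : eqType) (e : rel A) x y n1 n2 :
  n1 <= n2 -> within_dist e x y n1 -> within_dist e x y n2.
Proof. move=> h [p [P1 L1 S1]]; exists p; split => //; exact: leq_trans h. Qed.

Lemma wd_refl (A : eqType) (e : rel A) x n : within_dist e x x n.
Proof. by exists [::]. Qed.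

Lemma wd_step (A : eqType) (e : rel A) x y : e x y -> within_dist e x y 1.
Proof. by move=> h; exists [:: y]; rewrite /= h. Qed.

Lemma wd_sym (A : eqType) (e : rel A) x y n : symmetric e ->
  within_dist e x y n -> within_dist e y x n.
Proof.
move=> se [p [P1 L1 S1]]; exists (rev (belast x p)); split.
- rewrite -L1. move: P1; rewrite rev_path.
  by apply: sub_path => a b /=; rewrite se.
- case: p {P1 S1} L1 => [|a p] /= <- //. by rewrite rev_cons last_rcons.
- by rewrite size_rev size_belast.
Qed.

Lemma wd_map (A B : eqType) (e : rel A) (e' : rel B) (f : A -> B) x y n :
  (forall a b, e a b -> e' (f a) (f b)) ->
  within_dist e x y n -> within_dist e' (f x) (f y) n.
Proof.
move=> hf [p [P1 L1 S1]]; exists (map f p); split.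
- elim: p x P1 {L1 S1} => //= a p IH x /andP[h1 h2]. by rewrite hf // IH.
- by rewrite last_map L1.
- by rewrite size_map.
Qed.

Section G.
Variables (S T : finType) (R : igs S T).

Lemma etype_rcons_same p q x : ~~ iE R x x -> size p = size q ->
  etype_rev R (rcons p x) (rcons q x) = etype_rev R p q.
Proof.
move=> hx; elim: p q => [|a p IH] [|b q] //=.
- by rewrite (negbTE hx).
- case=> hs. rewrite IH // eqseq_rcons eqxx andbT. done.
Qed.

Lemma etype_cross n e e' x y t : x != y -> iE R x y -> ityp R x y = Some t ->
  iI R t e e' ->
  etype_rev R (rcons (nseq n e) x) (rcons (nseq n e') y) = Some t.
Proof.
move=> xy hE hT hI; elim: n => [|n IH] /=.
- by rewrite /= hE hT.
- rewrite IH hI eqseq_rcons (negbTE xy) andbF /=. done.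
Qed.

Lemma Em_cons m x u u' : ~~ iE R x x -> x \in iV R ->
  Em R m.+1 (x :: u) (x :: u') = Em R m u u'.
Proof.
move=> hx hV; rewrite /Em /word_in /= !rev_cons hV /= !eqSS.
case E1: (size u == m); case E2: (all _ u); case E3: (size u' == m);
  case E4: (all _ u') => //=.
by rewrite etype_rcons_same // !size_rev (eqP E1) (eqP E3).
Qed.

Lemma adjm_cons m x u u' : ~~ iE R x x -> x \in iV R ->
  adjm R m.+1 (x :: u) (x :: u') = adjm R m u u'.
Proof. by move=> hx hV; rewrite /adjm !Em_cons. Qed.

Lemma adjm_sym m : symmetric (adjm R m).
Proof. by move=> a b; rewrite /adjm orbC. Qed.

End G.

Lemma bigmin_le (I : eqType) (r : seq I) (P : pred I) (F : I -> nat) a i0 :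
  i0 \in r -> P i0 -> \big[minn/a]_(i <- r | P i) F i <= F i0.
Proof.
elim: r => [|b r IH] //; rewrite inE big_cons => /orP[/eqP <-|hr] hP.
- by rewrite hP geq_minl.
- case: (P b); [exact: leq_trans (geq_minr _ _) (IH hr hP) | exact: IH hr hP].
Qed.

Lemma g1_path (S T : finType) (R : igs S T) x y : igs_wf R ->
  x \in iV R -> y \in iV R ->
  exists p, [/\ path (adj1 R) x p, last x p = y & size p <= diam1 R].
Proof.
case=> _ _ _ hc _ hx hy.
have := hc x y hx hy; case/connectP => p0 P0 Ey; subst y.
move: hy; case: (shortenP P0) => p P U _ hy.
have hg : gdist (adj1 R) x (last x p) <= diam1 R.
  rewrite /diam1.
  apply: leq_trans (leq_bigmax_cond (P := fun x => x \in iV R) (F := fun x => \max_(y in iV R) gdist (adj1 R) x y) x hx).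
  exact: (leq_bigmax_cond (P := fun y => y \in iV R) (F := fun y => gdist (adj1 R) x y) (last x p) hy).
have hn : size p < #|S|.
  by move/card_uniqP: U => /= <-; apply: max_card.
have hr : reachn (adj1 R) (size p) x (last x p).
  by apply/existsP; exists (in_tuple p); rewrite /= P eqxx.
have hle : gdist (adj1 R) x (last x p) <= size p.
  by apply: (bigmin_le _ _ _ (i0 := Ordinal hn)) => //; rewrite mem_index_enum.
have K : (gdist (adj1 R) x (last x p) == #|S|) || reachn (adj1 R) (gdist (adj1 R) x (last x p)) x (last x p).
  rewrite /gdist; apply: (big_ind (fun v => (v == #|S|) || reachn (adj1 R) v x (last x p))).
  - by rewrite eqxx.
  - by move=> a b ha hb; rewrite /minn; case: ifP.
  - by move=> i ->; rewrite orbT.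
move: K; have -> : (gdist (adj1 R) x (last x p) == #|S|) = false.
  by apply/eqP => E; move: (leq_ltn_trans hle hn); rewrite E ltnn.
move=> /= /existsP [t /andP [Pt /eqP Lt]].
exists t; split => //; by rewrite size_tuple (leq_trans _ hg).
Qed.

Section Cube.
Variables (d l s' : nat) (R : igs (Sym d l.+3 s'.+1) 'I_d).
Hypotheses (hd : 0 < d) (hR : cubical R).

Local Notation Sy := (Sym d l.+3 s'.+1).

Definition corner (b : 'I_d -> bool) : Sy :=
  ([ffun i => if b i then ord_max else ord0], ord0).
Definition pt (b : 'I_d -> bool) (j : 'I_d) (k : 'I_l.+3) : Sy :=
  ([ffun i => if i == j then k else if b i then ord_max else ord0], ord0).
Definition setb (b : 'I_d -> bool) j (v : bool) := fun i => if i == j then v else b i.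

Lemma corner_ext b b' : (forall i, b i = b' i) -> corner b = corner b'.
Proof. by move=> h; congr pair; apply/ffunP => i; rewrite !ffunE h. Qed.

Lemma corner_pt0 b j : corner (setb b j false) = pt b j ord0.
Proof. by congr pair; apply/ffunP => i; rewrite !ffunE /setb; case: eqP. Qed.

Lemma corner_ptM b j : corner (setb b j true) = pt b j ord_max.
Proof. by congr pair; apply/ffunP => i; rewrite !ffunE /setb; case: eqP. Qed.

Lemma star_pt b j k : star j (pt b j k).
Proof.
rewrite /star /crd /sheet /= eqxx andbT; apply/forallP => i; apply/implyP => hij.
by rewrite ffunE (negbTE hij); case: (b i); rewrite eqxx ?orbT.
Qed.

Lemma star_corner b j : star j (corner b).
Proof.
rewrite (corner_ext (b' := setb b j (b j))); last by move=> i; rewrite /setb; case: eqP => // ->.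
by case: (b j); rewrite ?corner_pt0 ?corner_ptM star_pt.
Qed.

Let wf := hR.1.
Let mp := hR.2.1.
Let C1 : forall j (w : Sy), star j w -> w \in iV R.
Proof. by case: hR => _ [_ []]. Qed.
Let C2 := let: And4 _ c _ _ := hR.2.2 in c.
Let C3 := let: And4 _ _ c _ := hR.2.2 in c.

Lemma in_pt b j k : pt b j k \in iV R.
Proof. exact: C1 (star_pt b j k). Qed.

Lemma in_corner b : corner b \in iV R.
Proof. exact: C1 (star_corner b (Ordinal hd)). Qed.

Lemma noloop x : ~~ iE R x x.
Proof. by case: wf => _ _ h _ _; apply/negP => hx; move: (h x x hx); rewrite hx. Qed.

Lemma edge_in x y : iE R x y -> x \in iV R /\ y \in iV R.
Proof. by case: wf => _ h _ _ _; apply: h. Qed.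

Lemma typ_some x y : iE R x y -> exists t, ityp R x y = Some t.
Proof.
case: wf => _ _ _ _ [h _ _] /h; case: (ityp R x y) => // t _; by exists t.
Qed.

Lemma glue_corner t b : iI R t (corner (setb b t true)) (corner (setb b t false)).
Proof.
apply: C3; rewrite ?star_corner //.
- by move=> i hi; rewrite /crd !ffunE /setb (negbTE hi).
- by rewrite /crd ffunE /setb eqxx.
- by rewrite /crd ffunE /setb eqxx.
Qed.

Lemma cube_edge_uniq j j0 (x y : Sy) : cube_edge j x y -> cube_edge j0 x y -> j0 = j.
Proof.
case/andP => /forallP h1 /eqP h2; case/andP => _ /eqP h3.
case: (eqVneq j0 j) => // hne; move: (h1 j0); rewrite hne /= h3.
by rewrite eq_sym -addn1 -{2}(addn0 (crd x j0)) eqn_add2l.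
Qed.

Lemma typ_cube (x y : Sy) j : iE R x y -> cube_edge j x y -> ityp R x y = Some j.
Proof.
move=> hE hc; case: (typ_some hE) => t ht; rewrite ht; congr Some.
case: mp => _ _ _ h4 _.
have hF : iE (Rfull d l.+3 s'.+1) x y by apply/existsP; exists j.
have hT : ityp (Rfull d l.+3 s'.+1) x y = Some j.
  rewrite /=; case: pickP => [j0 hj0|hn]; first by rewrite (cube_edge_uniq hc hj0).
  by move: (hn j); rewrite hc.
have := h4 x y t j hE ht hF hT _ _ (glue_corner t (fun _ => false)).
case/and4P => /forallP h _ _ _; case: (eqVneq t j) => // hne.
move: (h t); rewrite hne /= /crd !ffunE /setb eqxx.
done.
Qed.


Lemma word_nseq m (c : Sy) : c \in iV R -> word_in R m (nseq m c).
Proof. by move=> hc; rewrite /word_in size_nseq eqxx all_nseq hc orbT. Qed.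

Lemma word_cons m (x : Sy) u : word_in R m.+1 (x :: u) = (x \in iV R) && word_in R m u.
Proof. by rewrite /word_in /= eqSS andbCA. Qed.

Lemma Em_cross m (x y : Sy) t e e' : iE R x y -> ityp R x y = Some t ->
  iI R t e e' -> e \in iV R -> e' \in iV R ->
  Em R m.+1 (x :: nseq m e) (y :: nseq m e').
Proof.
move=> hE hT hI he he'; case: (edge_in hE) => hx hy.
rewrite /Em !word_cons hx hy !word_nseq //= !rev_cons !rev_nseq.
rewrite (@etype_cross _ _ R m e e' x y t _ hE hT hI) //.
by apply/eqP => exy; move: (noloop x); rewrite {2}exy hE.
Qed.

Lemma lift m (x : Sy) u u' n : x \in iV R ->
  within_dist (adjm R m) u u' n -> within_dist (adjm R m.+1) (x :: u) (x :: u') n.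
Proof. by move=> hx; apply: wd_map => a b; rewrite adjm_cons // noloop. Qed.

Lemma skeleton m b j :
  within_dist (adjm R m) (nseq m (pt b j ord0)) (nseq m (pt b j ord_max)) (l.+3 ^ m - 1).
Proof.
elim: m => [|m IH]; first exact: wd_refl.
have X1 : 0 < l.+3 ^ m by rewrite expn_gt0.
suff K : forall k, k < l.+3 -> within_dist (adjm R m.+1) (nseq m.+1 (pt b j ord0))
   (pt b j (inord k) :: nseq m (pt b j ord_max)) (k.+1 * l.+3 ^ m - 1).
  have := K l.+2 (ltnSn _).
  have -> : (inord l.+2 : 'I_l.+3) = ord_max by apply: val_inj; rewrite /= inordK.
  by rewrite expnS.
elim => [|k IHk] hk.
  have -> : (inord 0 : 'I_l.+3) = ord0 by apply: val_inj; rewrite /= inordK.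
  by rewrite mul1n; apply: lift => //; rewrite in_pt.
have h1 := IHk (ltnW hk).
have hE : iE R (pt b j (inord k)) (pt b j (inord k.+1)).
  apply: (@C2 j); rewrite ?star_pt //.
  - by move=> i hi; rewrite /crd !ffunE (negbTE hi).
  - by rewrite /crd !ffunE eqxx !inordK // ltnW.
have hT : ityp R (pt b j (inord k)) (pt b j (inord k.+1)) = Some j.
  apply: typ_cube hE _; apply/andP; split.
  - by apply/forallP => i; apply/implyP => hi; rewrite /crd !ffunE (negbTE hi).
  - by rewrite /crd !ffunE eqxx !inordK // ltnW.
have hI : iI R j (pt b j ord_max) (pt b j ord0).
  apply: (@C3 j); rewrite ?star_pt //.
  - by move=> i hi; rewrite /crd !ffunE (negbTE hi).
  - by rewrite /crd !ffunE eqxx.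
  - by rewrite /crd !ffunE eqxx.
have h2 : within_dist (adjm R m.+1) (pt b j (inord k) :: nseq m (pt b j ord_max))
   (pt b j (inord k.+1) :: nseq m (pt b j ord0)) 1.
  by apply: wd_step; rewrite /adjm (Em_cross _ hE hT hI) ?in_pt.
have h3 := lift (in_pt b j (inord k.+1)) IH.
apply: wd_mono (wd_cat (wd_cat h1 h2) h3).
rewrite !mulSn; lia.
Qed.


Lemma corner_self b j w : b j = w -> corner b = corner (setb b j w).
Proof. by move=> h; apply: corner_ext => i; rewrite /setb; case: eqP => // ->. Qed.

Lemma flip m b j v :
  within_dist (adjm R m) (nseq m (corner b)) (nseq m (corner (setb b j v))) (l.+3 ^ m - 1).
Proof.
case: v; case Hb: (b j).
- by rewrite -(corner_self Hb); exact: wd_refl.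
- by rewrite (corner_self Hb) corner_pt0 corner_ptM; exact: skeleton.
- rewrite (corner_self Hb) corner_pt0 corner_ptM.
  by apply: wd_sym; [exact: adjm_sym | exact: skeleton].
- by rewrite -(corner_self Hb); exact: wd_refl.
Qed.

Lemma travel m p (a : Sy) b0 : a \in iV R -> path (adj1 R) a p ->
  exists b1, within_dist (adjm R m.+1) (a :: nseq m (corner b0))
     (last a p :: nseq m (corner b1)) (size p * l.+3 ^ m).
Proof.
have X1 : 0 < l.+3 ^ m by rewrite expn_gt0.
elim: p a b0 => [|x p IH] a b0 ha /=.
  by move=> _; exists b0; exact: wd_refl.
case/andP => /orP hax hp.
have hx : x \in iV R by case: hax => /edge_in [].
case: hax => hE.
- case: (typ_some hE) => t hT.
  have [b1 h3] := IH x (setb b0 t false) hx hp.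
  exists b1.
  have h1 := lift ha (flip m b0 t true).
  have h2 : within_dist (adjm R m.+1) (a :: nseq m (corner (setb b0 t true)))
      (x :: nseq m (corner (setb b0 t false))) 1.
    by apply: wd_step; rewrite /adjm (Em_cross _ hE hT (glue_corner t b0)) ?in_corner.
  apply: wd_mono (wd_cat (wd_cat h1 h2) h3); by rewrite mulSn subnK.
- case: (typ_some hE) => t hT.
  have [b1 h3] := IH x (setb b0 t true) hx hp.
  exists b1.
  have h1 := lift ha (flip m b0 t false).
  have h2 : within_dist (adjm R m.+1) (a :: nseq m (corner (setb b0 t false)))
      (x :: nseq m (corner (setb b0 t true))) 1.
    have E : corner (setb b0 t false) = corner (setb (setb b0 t true) t false).
      by apply: corner_ext => i; rewrite /setb; case: eqP.
    have E' : corner (setb b0 t true) = corner (setb (setb b0 t true) t true).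
      by apply: corner_ext => i; rewrite /setb; case: eqP.
    apply: wd_step; rewrite /adjm E E'.
    by rewrite (Em_cross _ hE hT (glue_corner t _)) ?in_corner ?orbT.
  apply: wd_mono (wd_cat (wd_cat h1 h2) h3); by rewrite mulSn subnK.
Qed.

Lemma reach_corner m w b : word_in R m w ->
  within_dist (adjm R m) w (nseq m (corner b)) (diam1 R * l.+3 ^ m).
Proof.
elim: m w b => [|m IH] w b.
  by case: w => // _; exact: wd_refl.
case: w => [|a w] //; rewrite word_cons => /andP [ha hw].
have [p [P Lp Sp]] := g1_path wf ha (in_corner b).
have h1 := lift ha (IH w b hw).
have [b1 h2] := travel m b ha P.
rewrite Lp in h2.
have h3 := lift (in_corner b) (IH _ b (word_nseq m (in_corner b1))).
apply: wd_mono (wd_cat (wd_cat h1 h2) h3).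
have X : size p * l.+3 ^ m <= diam1 R * l.+3 ^ m by rewrite leq_mul2r Sp orbT.
rewrite expnS; nia.
Qed.

Lemma main_sec m w v : word_in R m w -> word_in R m v ->
  within_dist (adjm R m) w v (4 * diam1 R * l.+3 ^ m).
Proof.
move=> hw hv.
have h1 := reach_corner (fun _ => false) hw.
have h2 := wd_sym (adjm_sym R m) (reach_corner (fun _ => false) hv).
apply: wd_mono (wd_cat h1 h2); nia.
Qed.

End Cube.

Theorem proposition5p17 (d L s : nat) (R : igs (Sym d L s) 'I_d) :
  1 <= d -> 1 <= s -> 3 <= L -> cubical R ->
  forall (m : nat) (w v : seq (Sym d L s)),
    word_in R m w -> word_in R m v ->
    within_dist (adjm R m) w v (4 * diam1 R * L ^ m).
Proof.
move=> hd hs hL; case: L R hL => [|[|[|l]]] // R _.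
case: s R hs => [|s'] // R _ hR.
move=> m w v; exact: (main_sec hd hR).
Qed.
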